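(* The general reduction algorithm, started from any nonzero integer quadruple, halts after finitely many steps. Let the reduced quadruple at termination be ordered as $\mathbf a=(a,b,c,d)$ with $a\le b\le c\le d$, and suppose $L(\mathbf a)=a+b+c+d\ge 0$. Then exactly one of the following holds: (i) $a+b+c\ge d>0$; (ii) $a+b+c\le 0<d$. Furthermore, if $\mathbf a=(a,b,c,d)$ (with $a\le b\le c\le d$) is a reduced quadruple with $L(\mathbf a)<0$, then $\mathbf a^*=(-d,-c,-b,-a)$ is a reduced quadruple with $L(\mathbf a^* )>0$.
   Context: Let $\mathbf S_1,\dots,\mathbf S_4$ be the $4\times4$ integer matrices acting on column vectors $(a_1,a_2,a_3,a_4)^T$ by replacing the $i$-th coordinate $a_i$ by $2\sum_{j\ne i}a_j-a_i$ and leaving the other coordinates fixed (e.g. $\mathbf S_4(a,b,c,d)^T=(a,b,c,2(a+b+c)-d)^T$). For $\mathbf v=(a,b,c,d)$ put $|\mathbf v|=|a|+|b|+|c|+|d|$ and $L(\mathbf v)=a+b+c+d$. General reduction algorithm: given an integer quadruple, (1) order it so that $a\le b\le c\le d$; then test in order $i=1,2,3,4$ whether $|\mathbf S_i\mathbf v|<|\mathbf v|$; for the first such $i$, replace $\mathbf v$ by $\mathbf S_i\mathbf v$ and repeat; (2) if no $\mathbf S_i$ strictly decreases $|\mathbf v|$, halt. A quadruple $\mathbf v$ for which no $\mathbf S_i$ strictly decreases $|\mathbf v|$ is called reduced. A reduced quadruple with $L\ge0$ satisfying (i) is called a root quadruple, one satisfying (ii) an exceptional quadruple; a reduced $\mathbf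 a$ with $L(\mathbf a)<0$ is called root (resp. exceptional) iff $\mathbf a^*$ is. *)

(* Defs.v *)
From Stdlib Require Import ZArith Lia.
Open Scope Z_scope.

Record quad := Q { q1 : Z; q2 : Z; q3 : Z; q4 : Z }.

Definition qnorm (v : quad) : Z := Z.abs (q1 v) + Z.abs (q2 v) + Z.abs (q3 v) + Z.abs (q4 v).
Definition qL (v : quad) : Z := q1 v + q2 v + q3 v + q4 v.

Definition Smat (i : nat) (v : quad) : quad :=
  let '(Q a b c d) := v in
  match i with
  | 1%nat => Q (2 * (b + c + d) - a) b c d
  | 2%nat => Q a (2 * (a + c + d) - b) c d
  | 3%nat => Q a b (2 * (a + b + d) - c) d
  | 4%nat => Q a b c (2 * (a + b + c) - d)
  | _ => v
  end.

Definition sort4 (v : quad) : quad :=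
  let '(Q x0 x1 x2 x3) := v in
  let '(y0, y1) := (Z.min x0 x1, Z.max x0 x1) in
  let '(y2, y3) := (Z.min x2 x3, Z.max x2 x3) in
  let '(z0, z2) := (Z.min y0 y2, Z.max y0 y2) in
  let '(z1, z3) := (Z.min y1 y3, Z.max y1 y3) in
  let '(w1, w2) := (Z.min z1 z2, Z.max z1 z2) in
  Q z0 w1 w2 z3.

Definition step (v : quad) : option quad :=
  let w := sort4 v in
  if qnorm (Smat 1 w) <? qnorm w then Some (Smat 1 w)
  else if qnorm (Smat 2 w) <? qnorm w then Some (Smat 2 w)
  else if qnorm (Smat 3 w) <? qnorm w then Some (Smat 3 w)
  else if qnorm (Smat 4 w) <? qnorm w then Some (Smat 4 w)
  else None.

Fixpoint run (n : nat) (v : quad) : option quad :=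
  match n with
  | O => Some v
  | S m => match step v with Some w => run m w | None => None end
  end.

Definition reduced (v : quad) : Prop :=
  forall i : nat, (1 <= i <= 4)%nat -> ~ (qnorm (Smat i v) < qnorm v).

Definition qsorted (v : quad) : Prop := q1 v <= q2 v <= q3 v /\ q3 v <= q4 v.

Definition qstar (v : quad) : quad := Q (- q4 v) (- q3 v) (- q2 v) (- q1 v).

(* Main.v *)
Require Import Defs.
From Stdlib Require Import ZArith Lia.
Open Scope Z_scope.

Lemma mm x y : {Z.min x y = x /\ Z.max x y = y /\ x <= y} + {Z.min x y = y /\ Z.max x y = x /\ y <= x}.
Proof.
  destruct (Z_le_gt_dec x y).
  - left. rewrite Z.min_l, Z.max_r by assumption. auto.
  - right. rewrite Z.min_r, Z.max_l by (apply Z.lt_le_incl; apply Z.gt_lt; assumption).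
    split; [reflexivity|split; [reflexivity|apply Z.lt_le_incl; apply Z.gt_lt; assumption]].
Qed.

Ltac mmsplit := repeat match goal with |- context[Z.min ?x ?y] =>
  let E1 := fresh in let E2 := fresh in
  destruct (mm x y) as [[E1 [E2 ?]]|[E1 [E2 ?]]]; rewrite ?E1, ?E2; clear E1 E2 end.

Lemma sort4_norm v : qnorm (sort4 v) = qnorm v.
Proof. destruct v as [a b c d]; unfold sort4, qnorm; cbn [q1 q2 q3 q4]; mmsplit; ring. Qed.

Lemma sort4_sorted v : qsorted (sort4 v).
Proof. destruct v as [a b c d]; unfold sort4, qsorted; cbn [q1 q2 q3 q4]; mmsplit; lia. Qed.

Lemma sort4_nz v : v <> Q 0 0 0 0 -> sort4 v <> Q 0 0 0 0.
Proof.
  destruct v as [a b c d]; unfold sort4; cbv beta iota zeta; mmsplit; intros H E; injection E; intros;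
  apply H; f_equal; lia.
Qed.

Lemma Smat_zero i x : Smat i x = Q 0 0 0 0 -> x = Q 0 0 0 0.
Proof.
  destruct x as [a b c d]; intros E.
  destruct i as [|[|[|[|[|i]]]]]; unfold Smat in E; cbv beta iota zeta in E; try exact E;
  pose proof (f_equal q1 E) as E1; pose proof (f_equal q2 E) as E2; pose proof (f_equal q3 E) as E3; pose proof (f_equal q4 E) as E4; cbn [q1 q2 q3 q4] in E1, E2, E3, E4; f_equal; lia.
Qed.

Lemma Smat_nz i x : qnorm (Smat i x) < qnorm x -> Smat i x <> Q 0 0 0 0.
Proof.
  intros Hl E. pose proof (Smat_zero _ _ E) as E2. rewrite E, E2 in Hl.
  exact (Z.lt_irrefl _ Hl).
Qed.

Lemma step_dec v w : step v = Some w -> qnorm w < qnorm v /\ w <> Q 0 0 0 0.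
Proof.
  unfold step. rewrite <- (sort4_norm v).
  destruct (Z.ltb_spec (qnorm (Smat 1 (sort4 v))) (qnorm (sort4 v)));
  [intros E; injection E; intros; subst; split; auto; apply Smat_nz; auto|].
  destruct (Z.ltb_spec (qnorm (Smat 2 (sort4 v))) (qnorm (sort4 v)));
  [intros E; injection E; intros; subst; split; auto; apply Smat_nz; auto|].
  destruct (Z.ltb_spec (qnorm (Smat 3 (sort4 v))) (qnorm (sort4 v)));
  [intros E; injection E; intros; subst; split; auto; apply Smat_nz; auto|].
  destruct (Z.ltb_spec (qnorm (Smat 4 (sort4 v))) (qnorm (sort4 v)));
  [intros E; injection E; intros; subst; split; auto; apply Smat_nz; auto|].
  discriminate.
Qed.

Lemma step_none4 w : step w = None -> qnorm (sort4 w) <= qnorm (Smat 4 (sort4 w)).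
Proof.
  unfold step.
  destruct (Z.ltb_spec (qnorm (Smat 1 (sort4 w))) (qnorm (sort4 w))); [discriminate|].
  destruct (Z.ltb_spec (qnorm (Smat 2 (sort4 w))) (qnorm (sort4 w))); [discriminate|].
  destruct (Z.ltb_spec (qnorm (Smat 3 (sort4 w))) (qnorm (sort4 w))); [discriminate|].
  destruct (Z.ltb_spec (qnorm (Smat 4 (sort4 w))) (qnorm (sort4 w))); [discriminate|].
  auto.
Qed.

Lemma qnorm_nonneg v : 0 <= qnorm v.
Proof. unfold qnorm; pose proof (Z.abs_nonneg (q1 v)); pose proof (Z.abs_nonneg (q2 v)); pose proof (Z.abs_nonneg (q3 v)); pose proof (Z.abs_nonneg (q4 v)); lia. Qed.

Lemma term n : forall v, (Z.to_nat (qnorm v) < n)%nat ->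
  exists (m : nat) (w : quad), run m v = Some w /\ step w = None.
Proof.
  induction n; intros v H; [lia|].
  destruct (step v) as [w|] eqn:E.
  - destruct (step_dec _ _ E) as [H1 _].
    destruct (IHn w) as [m [u [H2 H3]]].
    + pose proof (qnorm_nonneg w). lia.
    + exists (S m), u. simpl. rewrite E. auto.
  - exists 0%nat, v. auto.
Qed.

Lemma run_nz n : forall v w, v <> Q 0 0 0 0 -> run n v = Some w -> w <> Q 0 0 0 0.
Proof.
  induction n; intros v w Hv H; simpl in H.
  - injection H; intros; subst; auto.
  - destruct (step v) as [u|] eqn:E; [|discriminate].
    apply (IHn u); auto. apply (step_dec _ _ E).
Qed.

Lemma qnorm_star x : qnorm (qstar x) = qnorm x.
Proof. destruct x as [a b c d]; unfold qnorm, qstar; cbn [q1 q2 q3 q4]; rewrite !Z.abs_opp; ring. Qed.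
Lemma Sstar1 x : Smat 1 (qstar x) = qstar (Smat 4 x).
Proof. destruct x as [a b c d]; unfold qstar; cbn [Smat q1 q2 q3 q4]; f_equal; ring. Qed.
Lemma Sstar2 x : Smat 2 (qstar x) = qstar (Smat 3 x).
Proof. destruct x as [a b c d]; unfold qstar; cbn [Smat q1 q2 q3 q4]; f_equal; ring. Qed.
Lemma Sstar3 x : Smat 3 (qstar x) = qstar (Smat 2 x).
Proof. destruct x as [a b c d]; unfold qstar; cbn [Smat q1 q2 q3 q4]; f_equal; ring. Qed.
Lemma Sstar4 x : Smat 4 (qstar x) = qstar (Smat 1 x).
Proof. destruct x as [a b c d]; unfold qstar; cbn [Smat q1 q2 q3 q4]; f_equal; ring. Qed.

Theorem theorem3p1 :
  (forall v : quad, v <> Q 0 0 0 0 ->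
     (exists (n : nat) (w : quad), run n v = Some w /\ step w = None) /\
     (forall (n : nat) (w : quad), run n v = Some w -> step w = None ->
        let a := sort4 w in
        0 <= qL a ->
        ((q1 a + q2 a + q3 a >= q4 a /\ q4 a > 0) /\ ~ (q1 a + q2 a + q3 a <= 0 /\ 0 < q4 a)) \/
        (~ (q1 a + q2 a + q3 a >= q4 a /\ q4 a > 0) /\ (q1 a + q2 a + q3 a <= 0 /\ 0 < q4 a)))) /\
  (forall a : quad, qsorted a -> reduced a -> qL a < 0 ->
     reduced (qstar a) /\ qL (qstar a) > 0).
Proof.
  split.
  - intros v Hv. split.
    + apply (term (S (Z.to_nat (qnorm v)))). lia.
    + intros n w Hr Hs a HL.
      pose proof (run_nz _ _ _ Hv Hr) as Hw.
      pose proof (sort4_nz _ Hw) as Ha.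
      pose proof (sort4_sorted w) as Hso.
      pose proof (step_none4 _ Hs) as H4.
      subst a. revert HL Ha Hso H4. destruct (sort4 w) as [a b c d].
      unfold qL, qsorted, qnorm, Smat, q1, q2, q3, q4. intros HL Ha Hso H4.
      assert (H5 : Z.abs d <= Z.abs (2 * (a + b + c) - d)).
      { apply (Z.add_le_mono_l _ _ (Z.abs a + Z.abs b + Z.abs c)). exact H4. }
      clear H4 Hw Hr Hs.
      assert (d > 0).
      { destruct (Z_le_gt_dec d 0); auto. exfalso; apply Ha; clear Ha H5; f_equal; lia. }
      rewrite (Z.abs_eq d) in H5 by lia. clear Ha HL.
      destruct (Z_le_gt_dec (a + b + c) 0); [right; lia|].
      destruct (Z_le_gt_dec d (a + b + c)); [left; lia|].
      exfalso. pose proof (Z.abs_spec (2*(a+b+c)-d)). lia.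
  - intros a Hs Hr HL.
    split; [|unfold qL, qstar in *; cbn [q1 q2 q3 q4]; lia].
    intros i Hi.
    destruct i as [|[|[|[|[|i]]]]]; [lia| | | | |lia].
    + rewrite Sstar1, !qnorm_star. apply Hr; lia.
    + rewrite Sstar2, !qnorm_star. apply Hr; lia.
    + rewrite Sstar3, !qnorm_star. apply Hr; lia.
    + rewrite Sstar4, !qnorm_star. apply Hr; lia.
Qed.
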